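(* Let $M \ge 1$, $\mathcal{Y} = \{1,\ldots,M\}$, $K \le M$, and let ${\bm V} \in \mathbb{R}^{M\times K}$, so that ${\bm L} = {\bm V}{\bm V}^\top$ is a positive semi-definite kernel of rank at most $K$ defining a determinantal point process (DPP) on $\mathcal{Y}$. Let $A \subseteq \mathcal{Y}$ and $\bar A = \mathcal{Y}\setminus A$. Then the conditional marginal probabilities $P_i = \Pr(i \in Y \mid A \subseteq Y)$, for all $i \in \bar A$, of the DPP conditioned on the event that all items of $A$ are observed (i.e. of the DPP on $\bar A$ with conditioned kernel ${\bm L}^A$) can be computed, given ${\bm V}$ and $A$, in $\mathcal{O}(K^3 + |A|^3 + K^2|A|^2 + |\bar A|K^2)$ time.
   Context: A determinantal point process on the finite ground set $\mathcal{Y}$ with positive semi-definite kernel ${\bm L}\in\mathbb{R}^{M\times M}$ is the probability distribution on random subsets $Y\subseteq\mathcal{Y}$ given by $\Pr(Y = S) = \det({\bm L}_S)/\det({\bm L}+{\bm I})$, where ${\bm L}_S = [{\bm L}_{ij}]_{i,j\in S}$ (with $\det$ of the empty matrix equal to $1$). For $A \subseteq \mathcal{Y}$ with $\Pr(A\subseteq Y)>0$, conditioning this DPP on the event $A \subseteq Y$ gives a distribution of $Y\setminus A$ that is again a DPP on $\bar A = \mathcal{Y}\setminus A$, with kernel ${\bm L}^A$; its marginal probabilities are $P_i = \Pr(i\in Y \mid A\subseteq Y)$ for $i \in \bar A$. Time is measured in arithmetic operations on real numbers. *)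

(* Defs.v *)
From HB Require Import structures.
From mathcomp Require Import all_boot all_order all_algebra.
Set Implicit Arguments. Unset Strict Implicit. Unset Printing Implicit Defensive.
Import Order.TTheory GRing.Theory Num.Theory.
Local Open Scope ring_scope.

(* Principal submatrix L_S, rows/columns indexed by the elements of S
   (listed in the enumeration order of S; the determinant does not depend
   on this order).  For S = set0 it is the 0x0 matrix, whose det is 1. *)
Definition principal {R : pzRingType} {M : nat} (L : 'M[R]_M) (S : {set 'I_M})
  : 'M[R]_#|S| :=
  \matrix_(i, j) L (enum_val i) (enum_val j).

Definition dpp_prob {R : fieldType} {M : nat} (L : 'M[R]_M) (S : {set 'I_M}) : R :=
  \det (principal L S) / \det (L + 1%:M).

Definition dpp_prob_contains {R : fieldType} {M : nat} (L : 'M[R]_M)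
  (A : {set 'I_M}) : R :=
  \sum_(S : {set 'I_M} | A \subset S) dpp_prob L S.

Definition dpp_cond_marginal {R : fieldType} {M : nat} (L : 'M[R]_M)
  (A : {set 'I_M}) (i : 'I_M) : R :=
  dpp_prob_contains L (i |: A) / dpp_prob_contains L A.

Definition lowrank_kernel {R : comPzRingType} {M K : nat} (V : 'M[R]_(M, K))
  : 'M[R]_M := V *m V^T.

(* Registers start out holding the inputs; each instruction performs
   one arithmetic operation (+, -, *, /) on two operands (registers or
   real constants) and appends its result as a new register.  Cost =
   number of instructions = number of arithmetic operations.  A division
   by zero (or reference to a nonexistent register) makes the run fail. *)

Inductive operand (R : Type) := Reg of nat | Cst of R.
Arguments Reg {R}.

Inductive instr (R : Type) :=
| IAdd of operand R & operand R
| ISub of operand R & operand R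
| IMul of operand R & operand R
| IDiv of operand R & operand R.

Definition slp (R : Type) := seq (instr R).

Definition eval_operand {R : fieldType} (regs : seq R) (o : operand R) : option R :=
  match o with
  | Reg n => if (n < size regs)%N then Some (nth 0 regs n) else None
  | Cst c => Some c
  end.

Definition exec_instr {R : fieldType} (regs : seq R) (ins : instr R) : option R :=
  match ins with
  | IAdd a b => obind (fun x => omap (fun y => x + y) (eval_operand regs b))
                      (eval_operand regs a)
  | ISub a b => obind (fun x => omap (fun y => x - y) (eval_operand regs b))
                      (eval_operand regs a)
  | IMul a b => obind (fun x => omap (fun y => x * y) (eval_operand regs b))
                      (eval_operand regs a)
  | IDiv a b => obind (fun x => obind (fun y => if y == 0 then None
                                                else Some (x / y))
                                      (eval_operand regs b))
                      (eval_operand regs a)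
  end.

Fixpoint exec_slp {R : fieldType} (regs : seq R) (p : slp R) : option (seq R) :=
  match p with
  | [::] => Some regs
  | ins :: p' =>
      match exec_instr regs ins with
      | Some v => exec_slp (rcons regs v) p'
      | None => None
      end
  end.

Definition run_slp {R : fieldType} (p : slp R) (inputs : seq R) (o : operand R)
  : option R :=
  obind (fun regs => eval_operand regs o) (exec_slp inputs p).

Definition mx_inputs {R : Type} {M K : nat} (V : 'M[R]_(M, K)) : seq R :=
  [seq V ij.1 ij.2 | ij <- enum [set: 'I_M * 'I_K]].

(* Main.v *)
Require Import Defs.
From HB Require Import structures.
From mathcomp Require Import all_boot all_order all_algebra.
From mathcomp Require Import zify.
From mathcomp Require fingroup perm.
Set Implicit Arguments. Unset Strict Implicit. Unset Printing Implicit Defensive.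
Import Order.TTheory GRing.Theory Num.Theory.
Local Open Scope ring_scope.

Section SLP.
Variable R : fieldType.

Definition gen (T : Type) := nat -> slp R * T.
Definition ret {T} (x : T) : gen T := fun _ => ([::], x).
Definition bind {T U} (m : gen T) (f : T -> gen U) : gen U :=
  fun n => let p := m n in let q := f p.2 (n + size p.1)%N in (p.1 ++ q.1, q.2).
Definition emit (i : instr R) : gen (operand R) := fun n => ([:: i], Reg n).

Definition ev (r : seq R) (o : operand R) (v : R) := eval_operand r o = Some v.
Definition wp {T} (m : gen T) (r : seq R) (Q : seq R -> T -> Prop) :=
  exists s, exec_slp r (m (size r)).1 = Some (r ++ s) /\ Q (r ++ s) (m (size r)).2.

Lemma exec_cat (r : seq R) (c1 c2 : slp R) :
  exec_slp r (c1 ++ c2) = obind (fun r' => exec_slp r' c2) (exec_slp r c1).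
Proof.
elim: c1 r => [|i c1 IH] r //=.
by case: (exec_instr r i) => //.
Qed.

Lemma exec_size (r : seq R) (c : slp R) r' : exec_slp r c = Some r' -> size r' = (size r + size c)%N.
Proof.
elim: c r => [|i c IH] r /=; first by case=> <-; rewrite addn0.
case: (exec_instr r i) => // v /IH ->; by rewrite size_rcons addSnnS.
Qed.

Lemma wp_bind T U (m : gen T) (f : T -> gen U) r Q :
  wp m r (fun r' a => wp (f a) r' Q) -> wp (bind m f) r Q.
Proof.
case=> s [E [s2 [E2 HQ]]].
have Hs := exec_size E; rewrite size_cat in Hs.
have Hs' : size s = size (m (size r)).1 by apply/eqP; rewrite -(eqn_add2l (size r)) Hs.
rewrite /bind /=; exists (s ++ s2); rewrite size_cat Hs' in E2 HQ.
by rewrite exec_cat E /= E2 catA.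
Qed.

Lemma wp_ret T (x : T) r Q : Q r x -> wp (ret x) r Q.
Proof. by move=> H; exists [::]; rewrite cats0. Qed.

Lemma wp_conseq T (m : gen T) r (Q Q' : seq R -> T -> Prop) :
  wp m r Q -> (forall s a, Q (r ++ s) a -> Q' (r ++ s) a) -> wp m r Q'.
Proof. by case=> s [E H] H'; exists s; split => //; apply: H'. Qed.

Lemma ev_cat r s o v : ev r o v -> ev (r ++ s) o v.
Proof.
case: o => [n|c] //=; rewrite /ev /=.
case: ifP => // Hn [<-]; rewrite size_cat (leq_trans Hn) ?leq_addr //.
by rewrite nth_cat Hn.
Qed.

Lemma ev_last r v : ev (r ++ [:: v]) (Reg (size r)) v.
Proof. by rewrite /ev /= size_cat addn1 ltnSn nth_cat ltnn subnn. Qed.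

Lemma wp_emit i r v : exec_instr r i = Some v -> wp (emit i) r (fun r' o => ev r' o v).
Proof. by move=> E; exists [:: v]; rewrite /= E -cats1; split => //; apply: ev_last. Qed.

Lemma wp_add r a b x y : ev r a x -> ev r b y -> wp (emit (IAdd a b)) r (fun r' o => ev r' o (x + y)).
Proof. by move=> Ha Hb; apply: wp_emit; rewrite /= Ha Hb. Qed.
Lemma wp_sub r a b x y : ev r a x -> ev r b y -> wp (emit (ISub a b)) r (fun r' o => ev r' o (x - y)).
Proof. by move=> Ha Hb; apply: wp_emit; rewrite /= Ha Hb. Qed.
Lemma wp_mul r a b x y : ev r a x -> ev r b y -> wp (emit (IMul a b)) r (fun r' o => ev r' o (x * y)).
Proof. by move=> Ha Hb; apply: wp_emit; rewrite /= Ha Hb. Qed.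
Lemma wp_div r a b x y : ev r a x -> ev r b y -> y != 0 -> wp (emit (IDiv a b)) r (fun r' o => ev r' o (x / y)).
Proof. by move=> Ha Hb Hy; apply: wp_emit; rewrite /= Ha Hb /= (negbTE Hy). Qed.

Definition costle {T} (m : gen T) c := forall n, (size (m n).1 <= c)%N.

Lemma cost_bind T U (m : gen T) (f : T -> gen U) c1 c2 :
  costle m c1 -> (forall a, costle (f a) c2) -> costle (bind m f) (c1 + c2).
Proof. move=> H1 H2 n; rewrite /bind /= size_cat; apply: leq_add; [exact: H1 | exact: H2]. Qed.
Lemma cost_ret T (x : T) : costle (ret x) 0.
Proof. by []. Qed.
Lemma cost_emit i : costle (emit i) 1.
Proof. by []. Qed.
Lemma cost_mono T (m : gen T) c c' : costle m c -> (c <= c')%N -> costle m c'.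
Proof. by move=> H Hc n; apply: leq_trans (H n) Hc. Qed.

Fixpoint forF {T : eqType} {U} (d : U) (f : T -> gen U) (s : seq T) : gen (T -> U) :=
  match s with
  | [::] => ret (fun _ => d)
  | t :: s' => bind (f t) (fun o => bind (forF d f s')
                 (fun g => ret (fun t' => if t' == t then o else g t')))
  end.

Definition mono (P : seq R -> Prop) := forall r s, P r -> P (r ++ s).

Lemma wp_forF (T : eqType) (P : seq R -> Prop) (val : T -> R) f s r d :
  mono P -> P r ->
  (forall t r, P r -> wp (f t) r (fun r' o => ev r' o (val t))) ->
  wp (forF d f s) r (fun r' g => forall t, t \in s -> ev r' (g t) (val t)).
Proof.
move=> mP; elim: s r => [|t s IH] r Pr Hf /=; first by apply: wp_ret.
apply: wp_bind; eapply wp_conseq; first exact: (Hf t r Pr). move=> s1 a Ha.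
apply: wp_bind; eapply wp_conseq; first exact: (IH (r ++ s1) (mP _ s1 Pr) Hf). move=> s2 g Hg.
apply: wp_ret => t0; rewrite inE; case: eqP => [-> _|_ /= Ht0].
  exact: ev_cat.
by apply: Hg.
Qed.

Lemma cost_forF (T : eqType) U (d : U) (f : T -> gen U) s c :
  (forall t, costle (f t) c) -> costle (forF d f s) (c * size s).
Proof.
move=> Hf; elim: s => [|t s IH] /=; first by rewrite muln0.
apply: (cost_mono (c := (c + (c * size s + 0))%N)); last by rewrite addn0 mulnS.
apply: cost_bind => // a; apply: cost_bind => // g; exact: cost_ret.
Qed.

Definition evm {m n} r (O : 'M[operand R]_(m, n)) (X : 'M[R]_(m, n)) :=
  forall i j, ev r (O i j) (X i j).

Lemma evm_cat m n r s (O : 'M[operand R]_(m, n)) X : evm r O X -> evm (r ++ s) O X.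
Proof. by move=> H i j; apply: ev_cat. Qed.

Definition mxgen {m n} (f : 'I_m -> 'I_n -> gen (operand R)) : gen 'M[operand R]_(m, n) :=
  bind (forF (Cst 0) (fun p : 'I_m * 'I_n => f p.1 p.2) (enum [set: 'I_m * 'I_n]))
       (fun g => ret (\matrix_(i, j) g (i, j))).

Lemma wp_mxgen m n (P : seq R -> Prop) (X : 'M[R]_(m, n)) f r :
  mono P -> P r ->
  (forall i j r, P r -> wp (f i j) r (fun r' o => ev r' o (X i j))) ->
  wp (mxgen f) r (fun r' O => evm r' O X).
Proof.
move=> mP Pr Hf; apply: wp_bind.
eapply wp_conseq.
  apply: (wp_forF (P := P) (val := fun p : 'I_m * 'I_n => X p.1 p.2)) => //.
  by move=> [i j] r' Pr'; apply: Hf.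
move=> s g Hg.
by apply: wp_ret => i j; rewrite mxE; apply: (Hg (i, j)); rewrite mem_enum inE.
Qed.

Lemma cost_mxgen m n (f : 'I_m -> 'I_n -> gen (operand R)) c :
  (forall i j, costle (f i j) c) -> costle (mxgen f) (c * (m * n)).
Proof.
move=> H; apply: (cost_mono (c := (c * size (enum [set: 'I_m * 'I_n]) + 0)%N)).
  by apply: cost_bind => [|g]; [apply: cost_forF => -[i j]; apply: H | exact: cost_ret].
by rewrite addn0 -cardE cardsT card_prod !card_ord.
Qed.

End SLP.
Arguments ret {R T} x _.
Arguments bind {R T U} m f _.
Arguments forF {R T U} d f s _.
Arguments mxgen {R m n} f _.
Arguments emit {R} i _.

Section Gadgets.
Variable R : fieldType.
Local Notation op := (operand R).

Fixpoint dotl {q} (x y : 'I_q -> op) (s : seq 'I_q) (acc : op) : gen R op :=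
  match s with
  | [::] => ret acc
  | k :: s' => bind (emit (IMul (x k) (y k)))
                 (fun t => bind (emit (IAdd acc t)) (fun a => dotl x y s' a))
  end.

Lemma wp_dotl q (x y : 'I_q -> op) (xv yv : 'I_q -> R) s acc av r :
  (forall k, ev r (x k) (xv k)) -> (forall k, ev r (y k) (yv k)) -> ev r acc av ->
  wp (dotl x y s acc) r (fun r' o => ev r' o (av + \sum_(k <- s) xv k * yv k)).
Proof.
elim: s r acc av => [|k s IH] r acc av Hx Hy Ha /=.
  by apply: wp_ret; rewrite big_nil addr0.
apply: wp_bind; eapply wp_conseq; first exact: wp_mul.
move=> s1 t Ht; apply: wp_bind; eapply wp_conseq.
  by apply: wp_add; [apply: ev_cat Ha| apply: Ht].
move=> s2 a Ha'; eapply wp_conseq.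
  apply: IH Ha' => k'; rewrite -catA; apply: ev_cat; [exact: Hx | exact: Hy].
by move=> s3 o; rewrite big_cons addrA.
Qed.

Lemma cost_dotl q (x y : 'I_q -> op) s acc : costle (dotl x y s acc) (2 * size s).
Proof.
elim: s acc => [|k s IH] acc /=; first by rewrite muln0; exact: cost_ret.
apply: (cost_mono (c := (1 + (1 + 2 * size s))%N)); last by rewrite mulnS add1n addSn.
apply: cost_bind => [|t]; first exact: cost_emit.
by apply: cost_bind => [|a]; [exact: cost_emit | exact: IH].
Qed.

Definition matmul {p q n} (X : 'M[op]_(p, q)) (Y : 'M[op]_(q, n)) : gen R 'M[op]_(p, n) :=
  mxgen (fun i j => dotl (fun k => X i k) (fun k => Y k j) (index_enum 'I_q) (Cst 0)).

Lemma wp_matmul p q n (X : 'M[op]_(p, q)) (Y : 'M[op]_(q, n)) Xv Yv r :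
  evm r X Xv -> evm r Y Yv -> wp (matmul X Y) r (fun r' Z => evm r' Z (Xv *m Yv)).
Proof.
move=> HX HY.
apply: (wp_mxgen (P := fun r => evm r X Xv /\ evm r Y Yv)) => //.
  by move=> r0 s [H1 H2]; split; apply: evm_cat.
move=> i j r0 [H1 H2]; eapply wp_conseq.
  apply: wp_dotl; [move=> k; exact: H1 | move=> k; exact: H2 | by []].
by move=> s o /=; rewrite add0r mxE.
Qed.

Lemma cost_matmul p q n (X : 'M[op]_(p, q)) (Y : 'M[op]_(q, n)) :
  costle (matmul X Y) (2 * q * (p * n)).
Proof.
apply: cost_mxgen => i j; have := cost_dotl (fun k => X i k) (fun k => Y k j) (index_enum 'I_q) (Cst 0).
by rewrite /index_enum -enumT size_enum_ord.
Qed.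

Definition mxsubg {p n} (X Y : 'M[op]_(p, n)) : gen R 'M[op]_(p, n) :=
  mxgen (fun i j => emit (ISub (X i j) (Y i j))).

Lemma wp_mxsubg p n (X Y : 'M[op]_(p, n)) Xv Yv r :
  evm r X Xv -> evm r Y Yv -> wp (mxsubg X Y) r (fun r' Z => evm r' Z (Xv - Yv)).
Proof.
move=> HX HY.
apply: (wp_mxgen (P := fun r => evm r X Xv /\ evm r Y Yv)) => //.
  by move=> r0 s [H1 H2]; split; apply: evm_cat.
move=> i j r0 [H1 H2]; eapply wp_conseq; first by apply: wp_sub.
by move=> s o; rewrite !mxE.
Qed.

Lemma cost_mxsubg p n (X Y : 'M[op]_(p, n)) : costle (mxsubg X Y) (1 * (p * n)).
Proof. by apply: cost_mxgen => i j; exact: cost_emit. Qed.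

Definition addIg {n} (X : 'M[op]_n) : gen R 'M[op]_n :=
  mxgen (fun i j => emit (IAdd (X i j) (Cst (i == j)%:R))).

Lemma wp_addIg n (X : 'M[op]_n) Xv r :
  evm r X Xv -> wp (addIg X) r (fun r' Z => evm r' Z (Xv + 1%:M)).
Proof.
move=> HX.
apply: (wp_mxgen (P := fun r => evm r X Xv)) => //.
  by move=> r0 s H1; apply: evm_cat.
move=> i j r0 H1; eapply wp_conseq; first by apply: (wp_add (y := (i == j)%:R)).
by move=> s o; rewrite !mxE.
Qed.

Lemma cost_addIg n (X : 'M[op]_n) : costle (addIg X) (1 * (n * n)).
Proof. by apply: cost_mxgen => i j; exact: cost_emit. Qed.

Lemma evm_block m1 m2 n1 n2 r (O1 : 'M[op]_(m1, n1)) (O2 : 'M[op]_(m1, n2))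
  (O3 : 'M[op]_(m2, n1)) (O4 : 'M[op]_(m2, n2)) X1 X2 X3 X4 :
  evm r O1 X1 -> evm r O2 X2 -> evm r O3 X3 -> evm r O4 X4 ->
  evm r (block_mx O1 O2 O3 O4) (block_mx X1 X2 X3 X4).
Proof.
move=> H1 H2 H3 H4 i j.
rewrite -(splitK i) -(splitK j).
case: (split i) => a; case: (split j) => b /=.
- by rewrite !block_mxEul.
- by rewrite !block_mxEur.
- by rewrite !block_mxEdl.
- by rewrite !block_mxEdr.
Qed.

Lemma evm_ul m1 m2 n1 n2 r (O : 'M[op]_(m1 + m2, n1 + n2)) X :
  evm r O X -> evm r (ulsubmx O) (ulsubmx X).
Proof. by move=> H i j; rewrite !mxE. Qed.
Lemma evm_ur m1 m2 n1 n2 r (O : 'M[op]_(m1 + m2, n1 + n2)) X :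
  evm r O X -> evm r (ursubmx O) (ursubmx X).
Proof. by move=> H i j; rewrite !mxE. Qed.
Lemma evm_dl m1 m2 n1 n2 r (O : 'M[op]_(m1 + m2, n1 + n2)) X :
  evm r O X -> evm r (dlsubmx O) (dlsubmx X).
Proof. by move=> H i j; rewrite !mxE. Qed.
Lemma evm_dr m1 m2 n1 n2 r (O : 'M[op]_(m1 + m2, n1 + n2)) X :
  evm r O X -> evm r (drsubmx O) (drsubmx X).
Proof. by move=> H i j; rewrite !mxE. Qed.
Lemma evm_tr m n r (O : 'M[op]_(m, n)) X : evm r O X -> evm r O^T X^T.
Proof. by move=> H i j; rewrite !mxE. Qed.

End Gadgets.

Section PD.
Variable R : realFieldType.

Definition posdef n (X : 'M[R]_n) :=
  X^T = X /\ forall x : 'rV[R]_n, x != 0 -> 0 < (x *m X *m x^T) 0 0.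

Lemma mx11E (A : 'M[R]_1) : A = (A 0 0)%:M.
Proof. exact: mx11_scalar. Qed.

Lemma posdef_diag n (X : 'M[R]_n) i : posdef X -> 0 < X i i.
Proof.
case=> _ H.
have nz : delta_mx 0 i != 0 :> 'rV[R]_n.
  apply/negP => /eqP /matrixP /(_ 0 i); rewrite !mxE !eqxx /= => /eqP.
  by rewrite oner_eq0.
by have := H _ nz; rewrite -rowE trmx_delta -colE !mxE.
Qed.

Section Step.
Variables (n : nat) (a : R) (b : 'M[R]_(1, n)) (c : 'M[R]_(n, 1)) (D : 'M[R]_n).
Let X : 'M[R]_(1 + n) := block_mx a%:M b c D.
Hypothesis pdX : posdef X.

Lemma step_sym : c^T = b /\ b^T = c /\ D^T = D.
Proof.
case: pdX => sX _; move: sX; rewrite /X tr_block_mx => /eq_block_mx [_ h1 h2 h3].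
by [].
Qed.

Lemma step_a : 0 < a.
Proof.
have := posdef_diag (lshift n 0) pdX; rewrite /X block_mxEul mxE eqxx mulr1n.
by [].
Qed.

Definition schur := D - (a^-1 *: c) *m b.

Lemma step_schur : posdef schur.
Proof.
have [cb [bc Ds]] := step_sym; have a0 := step_a.
have an0 : a != 0 by rewrite gt_eqF.
split.
  rewrite /schur raddfB /= Ds trmx_mul linearZ /= cb bc.
  by rewrite -scalemxAr scalemxAl.
move=> y y0; case: pdX => _ H.
pose t := - a^-1 * (y *m c) 0 0.
pose x := row_mx (t%:M : 'M_1) y.
have x0 : x != 0.
  apply: contra y0 => /eqP; rewrite /x => /eqP; rewrite row_mx_eq0 => /andP [].
  by [].
have := H x x0; rewrite /x /X mul_row_block tr_row_mx mul_row_col.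
have -> : t%:M *m a%:M + y *m c = 0.
  rewrite -scalar_mxM [y *m c]mx11E -raddfD /= /t mulrAC mulNr mulVf // mulN1r addNr.
  by rewrite raddf0.
rewrite mul0mx add0r mulmxDl => h.
have eB : forall A B : 'M[R]_1, (A - B) 0 0 = A 0 0 - B 0 0 by move=> A B; rewrite !mxE.
have eD : forall A B : 'M[R]_1, (A + B) 0 0 = A 0 0 + B 0 0 by move=> A B; rewrite !mxE.
have e1 : (t%:M *m b *m y^T) 0 0 = t * (b *m y^T) 0 0.
  by rewrite mul_scalar_mx -scalemxAl mxE.
have e2 : (y *m (a^-1 *: c *m b) *m y^T) 0 0 = a^-1 * (y *m c) 0 0 * (b *m y^T) 0 0.
  rewrite -scalemxAl -scalemxAr -scalemxAl mxE !mulmxA -(mulmxA (y *m c)) mxE big_ord1.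
  by rewrite mulrA.
move: h; rewrite eD e1 /schur mulmxBr mulmxBl eB e2 /t.
by rewrite addrC mulNr mulNr.
Qed.

Lemma step_inv (Si : 'M[R]_n) : schur *m Si = 1%:M ->
  X *m block_mx ((a^-1 + ((b *m Si) *m (a^-1 *: c)) 0 0 * a^-1)%:M)
                (- (a^-1 *: (b *m Si))) (- (Si *m (a^-1 *: c))) Si = 1%:M.
Proof.
move=> hS; have an0 : a != 0 by rewrite gt_eqF // step_a.
set al := a^-1; set u := al *: c; set y := b *m Si; set w := (y *m u) 0 0.
have hD : D = schur + u *m b by rewrite /schur addrNK.
have hyu : y *m u = w%:M by rewrite [LHS]mx11E.
rewrite /X mulmx_block (scalar_mx_block 1 n 1); congr block_mx.
- rewrite -scalar_mxM mulmxN mulmxA -/y hyu -raddfB /=; congr scalar_mx.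
  by rewrite mulrDr mulrA /al mulfV // mulrAC mulfV // mul1r addrK.
- by rewrite mulmxN mul_scalar_mx scalerA /al mulfV // scale1r -/y addNr.
- rewrite mul_mx_scalar hD mulmxN mulmxDl mulmxA hS mul1mx -mulmxA (mulmxA b) -/y hyu.
  rewrite mul_mx_scalar scalerDl -scalerA -/u.
  by rewrite opprD addrACA !subrr addr0.
- rewrite mulmxN -scalemxAr scalemxAl -/u hD mulmxDl hS -mulmxA -/y.
  by rewrite addrCA addNr addr0.
Qed.

End Step.
End PD.

Lemma ev_cst (R : fieldType) r (c : R) : ev r (Cst c) c.
Proof. by []. Qed.

Section Inv.
Variable R : realFieldType.
Local Notation op := (operand R).

Fixpoint inv_gen (n : nat) : 'M[op]_n -> gen R 'M[op]_n :=
  match n return 'M[op]_n -> gen R 'M[op]_n with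
  | 0 => fun X => ret X
  | n'.+1 => fun X0 =>
    let X : 'M[op]_(1 + n') := X0 in
    let a := ulsubmx X ord0 ord0 in let b := ursubmx X in
    let c := dlsubmx X in let D := drsubmx X in
    bind (emit (IDiv (Cst 1) a)) (fun ai =>
    bind (mxgen (fun i j => emit (IMul ai (c i j)))) (fun u : 'M[op]_(n', 1) =>
    bind (mxgen (fun i j => bind (emit (IMul (u i ord0) (b ord0 j)))
                                 (fun t => emit (ISub (D i j) t)))) (fun S : 'M[op]_n' =>
    bind (inv_gen S) (fun Si =>
    bind (matmul b Si) (fun y =>
    bind (matmul y u) (fun yu =>
    bind (emit (IMul (yu ord0 ord0) ai)) (fun t1 =>
    bind (emit (IAdd ai t1)) (fun tl =>
    bind (mxgen (fun i j => bind (emit (IMul ai (y i j)))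
                                 (fun t => emit (ISub (Cst 0) t)))) (fun tr : 'M[op]_(1, n') =>
    bind (matmul Si u) (fun q =>
    bind (mxgen (fun i j => emit (ISub (Cst 0) (q i j)))) (fun bl : 'M[op]_(n', 1) =>
    ret (block_mx (const_mx tl : 'M[op]_1) tr bl Si : 'M[op]_(1 + n')))))))))))))
  end.

Lemma cost_inv n (X : 'M[op]_n) : costle (inv_gen X) (6 * n ^ 3).
Proof.
elim: n X => [|n IH] X /=; first exact: cost_ret.
eapply cost_mono.
  apply: cost_bind => [|ai]; first exact: cost_emit.
  apply: cost_bind => [|u]; first by apply: cost_mxgen => i j; exact: cost_emit.
  apply: cost_bind => [|S].
    apply: cost_mxgen => i j; apply: cost_bind => [|t]; exact: cost_emit.
  apply: cost_bind => [|Si]; first exact: IH.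
  apply: cost_bind => [|y]; first exact: cost_matmul.
  apply: cost_bind => [|yu]; first exact: cost_matmul.
  apply: cost_bind => [|t1]; first exact: cost_emit.
  apply: cost_bind => [|tl]; first exact: cost_emit.
  apply: cost_bind => [|tr].
    apply: cost_mxgen => i j; apply: cost_bind => [|t]; exact: cost_emit.
  apply: cost_bind => [|q]; first exact: cost_matmul.
  apply: cost_bind => [|bl]; first by apply: cost_mxgen => i j; exact: cost_emit.
  exact: cost_ret.
nia.
Qed.

Lemma wp_inv n (X : 'M[op]_n) (Xv : 'M[R]_n) r :
  evm r X Xv -> posdef Xv ->
  wp (inv_gen X) r (fun r' Y => exists Yv, evm r' Y Yv /\ Xv *m Yv = 1%:M).
Proof.
elim: n X Xv r => [|n IH] X Xv r HX pdX /=.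
  apply: wp_ret; exists Xv; split => //; apply/matrixP => i []. by [].
set av := ulsubmx (Xv : 'M_(1 + n)) ord0 ord0.
set bv := ursubmx (Xv : 'M_(1 + n)); set cv := dlsubmx (Xv : 'M_(1 + n)).
set Dv := drsubmx (Xv : 'M_(1 + n)).
have eX : (Xv : 'M_(1 + n)) = block_mx av%:M bv cv Dv.
  transitivity (block_mx (ulsubmx (Xv : 'M_(1 + n))) bv cv Dv); first by rewrite submxK.
  congr block_mx.
  by apply/matrixP => i j; rewrite !ord1 [RHS]mxE eqxx mulr1n.
have pdB : posdef (block_mx av%:M bv cv Dv) by rewrite -eX.
have a0 := step_a pdB; have an0 : av != 0 by rewrite gt_eqF.
have Ha := @evm_ul _ 1 n 1 n r X Xv HX ord0 ord0; have Hb := @evm_ur _ 1 n 1 n r X Xv HX.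
have Hc := @evm_dl _ 1 n 1 n r X Xv HX; have HD := @evm_dr _ 1 n 1 n r X Xv HX.
apply: wp_bind; eapply wp_conseq; first exact: (wp_div (x := 1) _ Ha an0).
move=> s1 ai Hai; rewrite div1r in Hai.
move: Hb Hc HD => /(evm_cat s1) Hb /(evm_cat s1) Hc /(evm_cat s1) HD.
apply: wp_bind; eapply wp_conseq.
  apply: (wp_mxgen (P := fun r => ev r ai av^-1 /\ evm r (dlsubmx (X : 'M[op]_(1 + n))) cv)
            (X := av^-1 *: cv)) => //.
    by move=> r0 s [h1 h2]; split; [apply: ev_cat | apply: evm_cat].
  move=> i j r0 [h1 h2]; eapply wp_conseq; first exact: (wp_mul h1 (h2 i j)).
  by move=> s o; rewrite !mxE.
move=> s2 u Hu.
move: Hai Hb Hc HD => /(ev_cat s2) Hai /(evm_cat s2) Hb /(evm_cat s2) Hc /(evm_cat s2) HD.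
apply: wp_bind; eapply wp_conseq.
  apply: (wp_mxgen (P := fun r => evm r u (av^-1 *: cv) /\ evm r (ursubmx (X : 'M[op]_(1 + n))) bv
                                   /\ evm r (drsubmx (X : 'M[op]_(1 + n))) Dv)
            (X := schur av bv cv Dv)) => //.
    by move=> r0 s [h1 [h2 h3]]; split; [|split]; apply: evm_cat.
  move=> i j r0 [h1 [h2 h3]]; apply: wp_bind; eapply wp_conseq.
    exact: (wp_mul (h1 i ord0) (h2 ord0 j)).
  move=> s o Ho; eapply wp_conseq; first exact: (wp_sub (evm_cat s h3 i j) Ho).
  by move=> s' o'; rewrite /schur !mxE big_ord1 !mxE.
move=> s3 S HS.
move: Hai Hb Hu => /(ev_cat s3) Hai /(evm_cat s3) Hb /(evm_cat s3) Hu.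
apply: wp_bind; eapply wp_conseq; first exact: (IH _ _ _ HS (step_schur pdB)).
move=> s4 Si [Siv [HSi eSi]].
move: Hai Hb Hu => /(ev_cat s4) Hai /(evm_cat s4) Hb /(evm_cat s4) Hu.
apply: wp_bind; eapply wp_conseq; first exact: (wp_matmul Hb HSi).
move=> s5 y Hy.
move: Hai Hu HSi => /(ev_cat s5) Hai /(evm_cat s5) Hu /(evm_cat s5) HSi.
apply: wp_bind; eapply wp_conseq; first exact: (wp_matmul Hy Hu).
move=> s6 yu Hyu.
move: Hai Hu HSi Hy => /(ev_cat s6) Hai /(evm_cat s6) Hu /(evm_cat s6) HSi /(evm_cat s6) Hy.
apply: wp_bind; eapply wp_conseq; first exact: (wp_mul (Hyu ord0 ord0) Hai).
move=> s7 t1 Ht1.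
move: Hai Hu HSi Hy => /(ev_cat s7) Hai /(evm_cat s7) Hu /(evm_cat s7) HSi /(evm_cat s7) Hy.
apply: wp_bind; eapply wp_conseq; first exact: (wp_add Hai Ht1).
move=> s8 tl Htl.
move: Hai Hu HSi Hy => /(ev_cat s8) Hai /(evm_cat s8) Hu /(evm_cat s8) HSi /(evm_cat s8) Hy.
apply: wp_bind; eapply wp_conseq.
  apply: (wp_mxgen (P := fun r => ev r ai av^-1 /\ evm r y (bv *m Siv))
            (X := - (av^-1 *: (bv *m Siv)))) => //.
    by move=> r0 s [h1 h2]; split; [apply: ev_cat | apply: evm_cat].
  move=> i j r0 [h1 h2]; apply: wp_bind; eapply wp_conseq; first exact: (wp_mul h1 (h2 i j)).
  move=> s o Ho; eapply wp_conseq; first exact: (wp_sub (ev_cst _ 0) Ho).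
  by move=> s' o'; rewrite !mxE sub0r.
move=> s9 tr Htr.
move: Htl Hu HSi => /(ev_cat s9) Htl /(evm_cat s9) Hu /(evm_cat s9) HSi.
apply: wp_bind; eapply wp_conseq; first exact: (wp_matmul HSi Hu).
move=> s10 q Hq.
move: Htl Htr HSi => /(ev_cat s10) Htl /(evm_cat s10) Htr /(evm_cat s10) HSi.
apply: wp_bind; eapply wp_conseq.
  apply: (wp_mxgen (P := fun r => evm r q (Siv *m (av^-1 *: cv)))
            (X := - (Siv *m (av^-1 *: cv)))) => //.
    by move=> r0 s h1; apply: evm_cat.
  move=> i j r0 h1; eapply wp_conseq; first exact: (wp_sub (ev_cst _ 0) (h1 i j)).
  by move=> s' o'; rewrite !mxE sub0r.
move=> s11 bl Hbl.
move: Htl Htr HSi => /(ev_cat s11) Htl /(evm_cat s11) Htr /(evm_cat s11) HSi.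
apply: wp_ret.
exists (block_mx ((av^-1 + ((bv *m Siv) *m (av^-1 *: cv)) 0 0 * av^-1)%:M)
                (- (av^-1 *: (bv *m Siv))) (- (Siv *m (av^-1 *: cv))) Siv).
split; last by rewrite eX; apply: step_inv.
apply: (@evm_block _ 1 n 1 n) => //.
move=> i j; rewrite !ord1 [const_mx _ _ _]mxE [X in ev _ _ X]mxE eqxx mulr1n. exact: Htl.
Qed.

End Inv.

Section Expand.
Variable R : fieldType.

Lemma cofactor_eq n (A B : 'M[R]_n) i0 :
  (forall i k, i != i0 -> k != i0 -> A i k = B i k) -> cofactor A i0 i0 = cofactor B i0 i0.
Proof.
move=> H; rewrite /cofactor; congr (_ * _); congr (\det _).
by apply/matrixP => i k; rewrite !mxE H // eq_sym neq_lift.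
Qed.

Lemma det_row_unit n (A : 'M[R]_n) i0 :
  (forall k, A i0 k = (i0 == k)%:R) -> \det A = cofactor A i0 i0.
Proof.
move=> H; rewrite (expand_det_row A i0) (bigD1 i0) //= big1 ?addr0 => [|k kn].
  by rewrite H eqxx mul1r.
by rewrite H eq_sym (negbTE kn) mul0r.
Qed.

Lemma det_row_delta n (A B : 'M[R]_n) i0 :
  (forall k, A i0 k = B i0 k + (i0 == k)%:R) ->
  (forall i k, i != i0 -> A i k = B i k) ->
  \det A = \det B + cofactor A i0 i0.
Proof.
move=> H1 H2.
pose E := \matrix_(i, k) if i == i0 then (i0 == k)%:R else A i k.
rewrite (@determinant_multilinear _ _ A B E i0 1 1).
- rewrite !mul1r; congr (_ + _); rewrite (det_row_unit (i0 := i0)).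
    by apply: cofactor_eq => i k hi hk; rewrite mxE (negbTE hi).
  by move=> k; rewrite mxE eqxx.
- by apply/matrixP => ? k; rewrite !mxE eqxx !mul1r H1.
- by apply/matrixP => i k; rewrite !mxE H2 // eq_sym neq_lift.
- by apply/matrixP => i k; rewrite !mxE eq_sym (negbTE (neq_lift _ _)).
Qed.

Definition Fm n (X : 'M[R]_n) (A B : {set 'I_n}) : 'M[R]_n :=
  \matrix_(i, j) if (i \in B) && (j \in B) then X i j + ((i == j) && (i \notin A))%:R
                 else (i == j)%:R.

Lemma expand_F n (X : 'M[R]_n) k : forall (A B : {set 'I_n}),
  #|B :\: A| = k -> A \subset B ->
  \det (Fm X A B) = \sum_(S : {set 'I_n} | (A \subset S) && (S \subset B)) \det (Fm X S S).
Proof.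
elim: k => [|k IH] A B hk hAB.
  have eAB : B = A.
    apply/eqP; rewrite eqEsubset hAB andbT; apply/subsetP => x xB.
    apply/negPn/negP => xA; move/eqP: hk; rewrite cards_eq0 => /eqP h.
    by have := in_set0 x; rewrite -h inE xA xB.
  subst B; rewrite (big_pred1 A) // => S /=; rewrite eq_sym eqEsubset.
  by [].
have [j jBA] : exists j, j \in B :\: A.
  by apply/set0Pn; rewrite -card_gt0 hk.
move: (jBA); rewrite inE => /andP [jA jB].
rewrite (@det_row_delta _ _ (Fm X (j |: A) B) j); first last.
- move=> i l ij; rewrite !mxE !inE (negbTE ij) /=.
  by case: ifP.
- move=> l; rewrite !mxE jB /= !inE eqxx /=.
  case: (boolP (l \in B)) => lB /=; first by rewrite jA andbF andbT addr0.
  have -> : (j == l) = false by apply/negP => /eqP e; rewrite -e jB in lB.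
  by rewrite addr0.
rewrite (@cofactor_eq _ _ (Fm X A (B :\ j))); last first.
  by move=> i l ij lj; rewrite !mxE !inE ij lj.
rewrite -det_row_unit; last by move=> l; rewrite mxE !inE eqxx.
have c1 : #|B :\: (j |: A)| = k.
  have : (#|B :\: A| = (j \in B :\: A) + #|(B :\: A) :\ j|)%N by rewrite -cardsD1.
  by rewrite jBA hk setDDl setUC => -[].
have c2 : #|(B :\ j) :\: A| = k.
  have : (#|B :\: A| = (j \in B :\: A) + #|(B :\: A) :\ j|)%N by rewrite -cardsD1.
  by rewrite jBA hk setDDl setDDl setUC => -[].
rewrite IH //; last by rewrite subUset sub1set jB hAB.
rewrite IH //; last by rewrite subsetD1 hAB jA.
symmetry; rewrite (bigID (fun S : {set 'I_n} => j \in S)) /=; congr (_ + _).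
  by apply: eq_bigl => S; rewrite subUset sub1set; case: (j \in S); rewrite ?andbF ?andbT.
apply: eq_bigl => S; rewrite subsetD1.
by case: (j \in S); rewrite ?andbF ?andbT.
Qed.

Lemma det_mxsub_bij m n (h : m = n) (f : 'I_m -> 'I_n) :
  injective f -> forall Y : 'M[R]_n, \det (mxsub f f Y) = \det Y.
Proof.
case: n / h in f *; move=> fi Y; set s := perm.perm fi.
have -> : mxsub f f Y = row_perm s (col_perm s Y).
  by apply/matrixP => i j; rewrite !mxE !perm.permE.
rewrite row_permE col_permE !det_mulmx !det_perm perm.odd_permV mulrCA.
by rewrite -signr_addb addbb expr0 mulr1.
Qed.

Lemma splitl p q (a : 'I_p) : split (lshift q a) = inl a.
Proof. exact: (unsplitK (inl a)). Qed.
Lemma splitr p q (a : 'I_q) : split (rshift p a) = inr a.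
Proof. exact: (unsplitK (inr a)). Qed.

Lemma principal_F n (X : 'M[R]_n) (S : {set 'I_n}) :
  \det (principal X S) = \det (Fm X S S).
Proof.
have h : (#|S| + #|~: S| = n)%N by rewrite cardsC card_ord.
pose f (k : 'I_(#|S| + #|~: S|)) : 'I_n :=
  match split k with inl a => enum_val a | inr b => enum_val b end.
have fi : injective f.
  move=> k1 k2; rewrite /f -(splitK k1) -(splitK k2).
  case: (split k1) => a1; case: (split k2) => a2; rewrite !unsplitK.
  - by move/enum_val_inj => ->.
  - move=> e; have := enum_valP a1; have := enum_valP a2.
    by rewrite e inE => /negP.
  - move=> e; have := enum_valP a1; have := enum_valP a2.
    by rewrite e inE => ? /negP.
  - by move/enum_val_inj => ->.
rewrite -(det_mxsub_bij h fi).
have -> : mxsub f f (Fm X S S) = block_mx (principal X S) 0 0 1%:M.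
  apply/matrixP => i j; rewrite -(splitK i) -(splitK j).
  case: (split i) => a; case: (split j) => b /=.
  - rewrite block_mxEul !mxE /f !splitl !enum_valP /=.
    by rewrite ?andbF ?addr0.
  - rewrite block_mxEur !mxE /f splitl splitr enum_valP /=.
    have := enum_valP b; rewrite inE => /negbTE -> /=.
    case: eqP => // e; have := enum_valP b; by rewrite -e inE enum_valP.
  - rewrite block_mxEdl !mxE /f splitl splitr.
    have := enum_valP a; rewrite inE => /negbTE -> /=.
    case: eqP => // e; have := enum_valP a; by rewrite e inE enum_valP.
  - rewrite block_mxEdr !mxE /f !splitr.
    have := enum_valP a; rewrite inE => /negbTE -> /=.
    by rewrite (inj_eq enum_val_inj).
by rewrite det_ublock det1 mulr1.
Qed.

Lemma sum_principal n (X : 'M[R]_n) (A : {set 'I_n}) :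
  \sum_(S : {set 'I_n} | A \subset S) \det (principal X S) = \det (Fm X A setT).
Proof.
rewrite (@expand_F _ _ #|setT :\: A|) ?subsetT //.
by apply: eq_big => [S|S _]; rewrite ?subsetT ?andbT ?principal_F.
Qed.

End Expand.

Lemma zm1 (V : zmodType) (v a w : V) : v - (v - a - w) - a = w.
Proof. by rewrite !opprB addrCA (addrC a) addNKr addrK. Qed.

Section LowRank.
Variable R : realFieldType.
Variables (M K : nat) (V : 'M[R]_(M, K)) (A : {set 'I_M}).

Definition Esel : 'M[R]_(M, #|A|) := \matrix_(k, l) (k == enum_val l)%:R.
Local Notation E := Esel.
Local Notation L := (V *m V^T).
Local Notation VA := (E^T *m V).

Lemma sum_delta (T : finType) (a : T) (F : T -> R) : \sum_k (k == a)%:R * F k = F a.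
Proof.
rewrite (bigD1 a) //= eqxx mul1r big1 ?addr0 // => k /negbTE ->; exact: mul0r.
Qed.

Lemma EtE : E^T *m E = 1%:M.
Proof.
apply/matrixP => l l'; rewrite !mxE.
under eq_bigr do rewrite !mxE.
by rewrite sum_delta (inj_eq enum_val_inj).
Qed.

Lemma EEt i j : (E *m E^T) i j = ((i == j) && (i \in A))%:R.
Proof.
rewrite mxE; under eq_bigr do rewrite !mxE.
case: (boolP (i \in A)) => iA.
  rewrite (bigD1 (enum_rank_in iA i)) //= enum_rankK_in // eqxx mul1r big1 ?addr0 ?andbT.
    by rewrite eq_sym.
  move=> l hl; have -> : (i == enum_val l) = false; last by rewrite mul0r.
  apply/negP => /eqP e; move/negP: hl; apply; apply/eqP; apply: enum_val_inj.
  by rewrite enum_rankK_in // e.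
rewrite andbF big1 // => l _.
have -> : (i == enum_val l) = false; last by rewrite mul0r.
by apply/negP => /eqP e; move: iA; rewrite e enum_valP.
Qed.

Lemma VAE : VA = \matrix_(l, k) V (enum_val l) k.
Proof.
apply/matrixP => l k; rewrite !mxE.
under eq_bigr do rewrite !mxE.
exact: sum_delta.
Qed.

Lemma Ete i : i \notin A -> E^T *m (delta_mx i 0 : 'cV[R]_M) = 0.
Proof.
move=> iA; apply/matrixP => l z; rewrite !mxE big1 // => k _; rewrite !mxE.
case: (eqVneq k (enum_val l)) => [e|]; last by rewrite mul0r.
have -> : (k == i) = false by apply/negP => /eqP e'; move: iA; rewrite -e' e enum_valP.
by rewrite mulr0.
Qed.

Lemma NE : Fm L A setT = L + 1%:M - E *m E^T.
Proof.
apply/matrixP => i j.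
have -> : (L + 1%:M - E *m E^T) i j = L i j + (i == j)%:R - (E *m E^T) i j by rewrite !mxE.
rewrite EEt /Fm mxE !inE /=.
case: (i \in A) => /=; rewrite ?andbT ?andbF; first by rewrite addr0 addrK.
by rewrite subr0.
Qed.

Lemma sq_ge0 n (y : 'rV[R]_n) : 0 <= (y *m y^T) 0 0.
Proof.
by rewrite mxE; apply: (@sumr_ge0 R) => k _; rewrite mxE -expr2 sqr_ge0.
Qed.

Lemma sq_gt0 n (y : 'rV[R]_n) : y != 0 -> 0 < (y *m y^T) 0 0.
Proof.
move=> y0; have [k yk] : exists k, y 0 k != 0.
  apply/existsP; apply: contraR y0 => /existsPn h; apply/eqP/matrixP => a b.
  by rewrite ord1 mxE; apply/eqP/negbNE/h.
rewrite mxE (bigD1 k) //= mxE -expr2; apply: ltr_pwDl.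
  by rewrite lt_def sqr_ge0 andbT expf_neq0.
by apply: (@sumr_ge0 R) => l _; rewrite mxE -expr2 sqr_ge0.
Qed.

Lemma posdef_P : posdef (V^T *m V + 1%:M).
Proof.
split; first by rewrite raddfD /= trmx_mul trmxK tr_scalar_mx.
move=> x x0; rewrite mulmxDr mulmxDl mulmx1 mxE.
have -> : x *m (V^T *m V) *m x^T = (x *m V^T) *m (x *m V^T)^T.
  by rewrite trmx_mul trmxK !mulmxA.
by rewrite ltr_wpDl ?sq_ge0 ?sq_gt0.
Qed.

Lemma posdef_KA (Bm : 'M[R]_K) : \det (Fm L A setT) != 0 ->
  (V^T *m V + 1%:M) *m Bm = 1%:M -> posdef (VA *m Bm *m VA^T).
Proof.
move=> dN hB; set P := V^T *m V + 1%:M.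
have [sP pP] := posdef_P; rewrite -/P in sP pP.
have hB' : Bm *m P = 1%:M by apply: mulmx1C.
have sB : Bm^T = Bm.
  have h : Bm^T *m P = 1%:M by rewrite -sP -trmx_mul hB tr_scalar_mx.
  by rewrite -[Bm^T]mulmx1 -hB mulmxA h mul1mx.
split; first by rewrite !trmx_mul !trmxK sB !mulmxA.
move=> x x0; set y := x *m VA.
have y0 : y != 0.
  apply/negP => /eqP y0; move/negP: dN; apply; apply/det0P.
  exists (x *m E^T).
    apply: contra x0 => /eqP u0; apply/eqP.
    by rewrite -[x]mulmx1 -EtE mulmxA u0 mul0mx.
  rewrite NE mulmxBr mulmxDr mulmx1 !mulmxA.
  have -> : x *m E^T *m V = y by rewrite /y mulmxA.
  by rewrite y0 !mul0mx add0r -(mulmxA x) EtE mulmx1 subrr.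
set u := y *m Bm.
have yu : y = u *m P by rewrite /u -mulmxA hB' mulmx1.
have u0 : u != 0 by apply: contra y0 => /eqP u0; rewrite yu u0 mul0mx.
have -> : x *m (VA *m Bm *m VA^T) *m x^T = u *m P *m u^T.
  have -> : x *m (VA *m Bm *m VA^T) *m x^T = u *m y^T by rewrite /u /y !trmx_mul !mulmxA.
  have -> : y^T = P^T *m u^T by rewrite {1}yu trmx_mul.
  by rewrite sP mulmxA.
exact: pP.
Qed.

Section Key.
Variables (Bm : 'M[R]_K) (Kinv : 'M[R]_#|A|).
Hypothesis hB : (V^T *m V + 1%:M) *m Bm = 1%:M.
Hypothesis hK : (VA *m Bm *m VA^T) *m Kinv = 1%:M.
Let G := Bm - (Bm *m VA^T) *m (Kinv *m (VA *m Bm)).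

Lemma solve_adj n (N : 'M[R]_n) (x : 'cV[R]_n) i :
  \det N != 0 -> N *m x = delta_mx i 0 -> x i 0 = cofactor N i i / \det N.
Proof.
move=> dN hx.
have : \adj N *m (N *m x) = \adj N *m delta_mx i 0 by rewrite hx.
rewrite mulmxA mul_adj_mx mul_scalar_mx => /matrixP /(_ i 0).
rewrite !mxE; under eq_bigr do rewrite !mxE.
rewrite (bigD1 i) //= big1 ?addr0 => [|k /negbTE ->]; last by rewrite andbT mulr0.
rewrite eqxx mulr1 => e; by rewrite -e mulrC mulKf.
Qed.

Lemma key i : i \notin A -> \det (Fm L A setT) != 0 ->
  (row i V *m G *m (row i V)^T) 0 0 =
  1 - cofactor (Fm L A setT) i i / \det (Fm L A setT).
Proof.
move=> iA dN.
set e : 'cV[R]_M := delta_mx i 0.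
set v := (row i V)^T.
have ve : V^T *m e = v by rewrite /v rowE trmx_mul trmx_delta.
set w := G *m v.
set z := Kinv *m (VA *m Bm) *m v.
set x := e - V *m w - E *m z.
have PW : (V^T *m V + 1%:M) *m w = v - VA^T *m z.
  by rewrite /w /G /z mulmxBl mulmxBr !mulmxA hB !mul1mx.
have VAw : VA *m w = 0.
  by rewrite /w /G mulmxBl mulmxBr !mulmxA hK mul1mx subrr.
have VtE : V^T *m E = VA^T by rewrite trmx_mul trmxK.
have Vtx : V^T *m x = w.
  rewrite /x !mulmxBr ve [V^T *m (V *m w)]mulmxA [V^T *m (E *m z)]mulmxA VtE.
  have -> : V^T *m V *m w = v - VA^T *m z - w by rewrite -PW mulmxDl mul1mx addrK.
  exact: zm1.
have Etx : E^T *m x = - z.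
  by rewrite /x !mulmxBr Ete // [E^T *m (V *m w)]mulmxA VAw [E^T *m (E *m z)]mulmxA EtE mul1mx subrr sub0r.
have Nx : Fm L A setT *m x = e.
  rewrite NE mulmxBl mulmxDl mul1mx -!mulmxA Vtx Etx mulmxN opprK.
  by rewrite /x addrA subrK addrC subrK.
rewrite -(solve_adj dN Nx).
have eB : forall X Y : 'cV[R]_M, (X - Y) i 0 = X i 0 - Y i 0 by move=> X Y; rewrite !mxE.
have h1 : (E *m z) i 0 = 0.
  rewrite mxE big1 // => l _; rewrite mxE.
  have -> : (i == enum_val l) = false; last by rewrite mul0r.
  by apply/negP => /eqP e'; move: iA; rewrite e' enum_valP.
have h2 : (V *m w) i 0 = (row i V *m G *m v) 0 0 by rewrite -mulmxA -row_mul [RHS]mxE.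
have h3 : e i 0 = 1 by rewrite mxE !eqxx.
rewrite /x !eB h1 h2 h3 subr0.
by rewrite opprB addrC subrK.
Qed.

End Key.
End LowRank.

Section Main.
Variable R : realFieldType.
Variables (M K : nat) (A : {set 'I_M}).
Local Notation op := (operand R).

Definition Vop : 'M[op]_(M, K) :=
  \matrix_(i, j) Reg (index (i, j) (enum [set: 'I_M * 'I_K])).

Lemma size_inputs (V : 'M[R]_(M, K)) : size (mx_inputs V) = (M * K)%N.
Proof. by rewrite size_map -cardE cardsT card_prod !card_ord. Qed.

Lemma evm_inputs (V : 'M[R]_(M, K)) : evm (mx_inputs V) Vop V.
Proof.
move=> i j; rewrite /ev mxE /= /mx_inputs size_map index_mem mem_enum inE /=.
by rewrite (nth_map (i, j)) ?index_mem ?mem_enum ?inE // nth_index // mem_enum inE.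
Qed.

Definition VAo : 'M[op]_(#|A|, K) := \matrix_(l, k) Vop (enum_val l) k.

Definition quad_gen (G : 'M[op]_K) (i : 'I_M) : gen R op :=
  bind (matmul (row i Vop) G) (fun h =>
  bind (matmul h (row i Vop)^T) (fun q => ret (q ord0 ord0))).

Definition main_prog : gen R ('I_M -> op) :=
  bind (matmul Vop^T Vop) (fun P0 =>
  bind (addIg P0) (fun P =>
  bind (inv_gen P) (fun Bm =>
  bind (matmul VAo Bm) (fun T1 =>
  bind (matmul T1 VAo^T) (fun KA =>
  bind (inv_gen KA) (fun Kinv =>
  bind (matmul Kinv T1) (fun T2 =>
  bind (matmul Bm VAo^T) (fun T0 =>
  bind (matmul T0 T2) (fun T3 =>
  bind (mxsubg Bm T3) (fun G =>
  forF (Cst 0) (quad_gen G) (enum 'I_M))))))))))).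

Lemma cost_main : costle main_prog
  (2 * K * (K * K) * 0 + 2 * M * (K * K) + (1 * (K * K) + (6 * K ^ 3 + (2 * K * (#|A| * K) +
   (2 * K * (#|A| * #|A|) + (6 * #|A| ^ 3 + (2 * #|A| * (#|A| * K) + (2 * K * (K * #|A|) +
   (2 * #|A| * (K * K) + (1 * (K * K) + (2 * K * (1 * K) + (2 * K * (1 * 1) + 0)) * M))))))))))%N.
Proof.
rewrite muln0 add0n.
apply: cost_bind => [|P0]; first by apply: (cost_mono (cost_matmul _ _)); nia.
apply: cost_bind => [|P]; first by apply: (cost_mono (cost_addIg _)); nia.
apply: cost_bind => [|Bm]; first by apply: (cost_mono (cost_inv _)); nia.
apply: cost_bind => [|T1]; first by apply: (cost_mono (cost_matmul _ _)); nia.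
apply: cost_bind => [|KA]; first by apply: (cost_mono (cost_matmul _ _)); nia.
apply: cost_bind => [|Kinv]; first by apply: (cost_mono (cost_inv _)); nia.
apply: cost_bind => [|T2]; first by apply: (cost_mono (cost_matmul _ _)); nia.
apply: cost_bind => [|T0]; first by apply: (cost_mono (cost_matmul _ _)); nia.
apply: cost_bind => [|T3]; first by apply: (cost_mono (cost_matmul _ _)); nia.
apply: cost_bind => [|G]; first by apply: (cost_mono (cost_mxsubg _ _)); nia.
apply: (cost_mono (c := ((2 * K * (1 * K) + (2 * K * (1 * 1) + 0)) * size (enum 'I_M))%N));
  last by rewrite size_enum_ord.
apply: cost_forF => i; apply: cost_bind => [|h]; first by apply: (cost_mono (cost_matmul _ _)); nia.
apply: cost_bind => [|q]; first by apply: (cost_mono (cost_matmul _ _)); nia.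
exact: cost_ret.
Qed.

Lemma evm_VAo r (V : 'M[R]_(M, K)) : evm r Vop V -> evm r VAo ((Esel R A)^T *m V).
Proof. by move=> H l k; rewrite VAE [X in ev _ _ X]mxE [VAo _ _]mxE; apply: H. Qed.

Lemma evm_row r m n (O : 'M[op]_(m, n)) X i : evm r O X -> evm r (row i O) (row i X).
Proof. by move=> H a b; rewrite !mxE. Qed.

Lemma contains_eq (X : 'M[R]_M) (B : {set 'I_M}) :
  dpp_prob_contains X B = \det (Fm X B setT) / \det (X + 1%:M).
Proof. by rewrite /dpp_prob_contains /dpp_prob -mulr_suml sum_principal. Qed.

Lemma hyp_dets (X : 'M[R]_M) : 0 < dpp_prob_contains X A ->
  \det (X + 1%:M) != 0 /\ \det (Fm X A setT) != 0.
Proof.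
rewrite contains_eq => h; split.
  by apply: contraTneq h => ->; rewrite invr0 mulr0 ltxx.
by apply: contraTneq h => ->; rewrite mul0r ltxx.
Qed.

Lemma marg_eq (X : 'M[R]_M) i : i \notin A -> 0 < dpp_prob_contains X A ->
  dpp_cond_marginal X A i = 1 - cofactor (Fm X A setT) i i / \det (Fm X A setT).
Proof.
move=> iA h; have [d1 dN] := hyp_dets h.
rewrite /dpp_cond_marginal !contains_eq.
have eN : \det (Fm X A setT) = \det (Fm X (i |: A) setT) + cofactor (Fm X A setT) i i.
  apply: det_row_delta.
  - by move=> k; rewrite !mxE !inE eqxx /= iA andbT andbF addr0.
  - move=> j k ji; rewrite !mxE !inE (negbTE ji) //.
have e : forall a b : R, (a / \det (X + 1%:M)) / (b / \det (X + 1%:M)) = a / b.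
  by move=> a b; rewrite invf_div mulrA -(mulrA a) mulVf // mulr1.
have eN' : \det (Fm X (i |: A) setT) = \det (Fm X A setT) - cofactor (Fm X A setT) i i.
  by rewrite eN addrK.
by rewrite e eN' mulrBl mulfV.
Qed.

Lemma wp_main (V : 'M[R]_(M, K)) : \det (Fm (V *m V^T) A setT) != 0 ->
  wp main_prog (mx_inputs V) (fun r g => forall i, i \notin A ->
    ev r (g i) (1 - cofactor (Fm (V *m V^T) A setT) i i / \det (Fm (V *m V^T) A setT))).
Proof.
move=> dN; have HV := evm_inputs V.
set VA := (Esel R A)^T *m V.
apply: wp_bind; eapply wp_conseq; first exact: (wp_matmul (evm_tr HV) HV).
move=> s1 P0 HP0; move: HV => /(evm_cat s1) HV.
apply: wp_bind; eapply wp_conseq; first exact: (wp_addIg HP0).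
move=> s2 P HP; move: HV => /(evm_cat s2) HV.
apply: wp_bind; eapply wp_conseq; first exact: (wp_inv HP (posdef_P V)).
move=> s3 Bm [Bmv [HBm hB]]; move: HV => /(evm_cat s3) HV.
have HVA := evm_VAo HV.
apply: wp_bind; eapply wp_conseq; first exact: (wp_matmul HVA HBm).
move=> s4 T1 HT1; move: HV HVA HBm => /(evm_cat s4) HV /(evm_cat s4) HVA /(evm_cat s4) HBm.
apply: wp_bind; eapply wp_conseq; first exact: (wp_matmul HT1 (evm_tr HVA)).
move=> s5 KA HKA; move: HV HVA HBm HT1 => /(evm_cat s5) HV /(evm_cat s5) HVA /(evm_cat s5) HBm /(evm_cat s5) HT1.
apply: wp_bind; eapply wp_conseq; first exact: (wp_inv HKA (posdef_KA dN hB)).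
move=> s6 Kinv [Kv [HKi hK]].
move: HV HVA HBm HT1 => /(evm_cat s6) HV /(evm_cat s6) HVA /(evm_cat s6) HBm /(evm_cat s6) HT1.
apply: wp_bind; eapply wp_conseq; first exact: (wp_matmul HKi HT1).
move=> s7 T2 HT2; move: HV HVA HBm => /(evm_cat s7) HV /(evm_cat s7) HVA /(evm_cat s7) HBm.
apply: wp_bind; eapply wp_conseq; first exact: (wp_matmul HBm (evm_tr HVA)).
move=> s8 T0 HT0; move: HV HBm HT2 => /(evm_cat s8) HV /(evm_cat s8) HBm /(evm_cat s8) HT2.
apply: wp_bind; eapply wp_conseq; first exact: (wp_matmul HT0 HT2).
move=> s9 T3 HT3; move: HV HBm => /(evm_cat s9) HV /(evm_cat s9) HBm.
apply: wp_bind; eapply wp_conseq; first exact: (wp_mxsubg HBm HT3).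
move=> s10 G HG; move: HV => /(evm_cat s10) HV.
eapply wp_conseq.
  apply: (wp_forF (P := fun r => evm r Vop V /\ evm r G (Bmv - Bmv *m VA^T *m (Kv *m (VA *m Bmv))))
    (val := fun i => (row i V *m (Bmv - Bmv *m VA^T *m (Kv *m (VA *m Bmv))) *m (row i V)^T) 0 0)).
  - by move=> r s [h1 h2]; split; apply: evm_cat.
  - by split; [exact: HV | exact: HG].
  move=> i r [h1 h2]; rewrite /quad_gen.
  apply: wp_bind; eapply wp_conseq; first exact: (wp_matmul (evm_row i h1) h2).
  move=> s h Hh; move: h1 => /(evm_cat s) h1.
  apply: wp_bind; eapply wp_conseq; first exact: (wp_matmul Hh (evm_tr (evm_row i h1))).
  by move=> s' q Hq; apply: wp_ret; apply: Hq.
move=> s11 g Hg i iA; have := Hg i (mem_enum _ i).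
by rewrite (key hB hK iA dN).
Qed.

End Main.

Theorem mainTheorem1 :
  exists C : nat,
  forall (R : realFieldType) (M K : nat) (A : {set 'I_M}),
    (1 <= M)%N -> (K <= M)%N ->
    exists (p : slp R) (out : 'I_M -> operand R),
      (size p <= C * (K ^ 3 + #|A| ^ 3 + K ^ 2 * #|A| ^ 2 + #|~: A| * K ^ 2))%N /\
      forall V : 'M[R]_(M, K),
        0 < dpp_prob_contains (lowrank_kernel V) A ->
        forall i : 'I_M, i \notin A ->
          run_slp p (mx_inputs V) (out i) =
          Some (dpp_cond_marginal (lowrank_kernel V) A i).
Proof.
exists 100%N => R M K A _ _.
exists (@main_prog R M K A (M * K)).1, (@main_prog R M K A (M * K)).2; split.
  apply: leq_trans (@cost_main R M K A (M * K)) _.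
  have hc : (#|A| + #|~: A| = M)%N by rewrite cardsC card_ord.
  move: #|A| #|~: A| hc => a b hc; subst M.
  have sq : forall x : nat, (x <= x ^ 2)%N by case=> // x; rewrite expnS leq_pmulr.
  have h1 : (K ^ 2 <= K ^ 3)%N by case: (K) => // k; rewrite [(_ ^ 3)%N]expnS leq_pmull.
  have h2 : (K ^ 2 * a <= K ^ 2 * a ^ 2)%N by rewrite leq_mul2l sq orbT.
  have h3 : (K * a ^ 2 <= K ^ 2 * a ^ 2)%N by rewrite leq_mul2r sq orbT.
  have h4 : (b * K <= b * K ^ 2)%N by rewrite leq_mul2l sq orbT.
  have h5 : (K * a <= K ^ 2 * a ^ 2)%N by apply: leq_trans (leq_mul (sq K) (sq a)).
  nia.
move=> V hpos i iA; have [d1 dN] := hyp_dets hpos.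
have [s [E H]] := wp_main dN; rewrite size_inputs in E H.
rewrite /run_slp E /= marg_eq //; exact: H.
Qed.
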